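(* Let $f(x)=a_nx^n+\dots+a_1x+a_0\in\mathbb{O}[x]$ with $n\ge1$ and $a_n\neq0$, where $\mathbb{O}$ is the real octonion algebra. Then every root $r\in\mathbb{O}$ of $f(x)$ and every root $r\in\mathbb{O}$ of $f'(x)$ satisfies $|r|<\widetilde R_1(f)=\frac{1}{|a_n|}\sqrt{|a_n|^2+|a_{n-1}|^2+\dots+|a_0|^2}$, $|r|<\widetilde R_2(f)=1+\frac{1}{|a_n|}\max_{0\le k\le n-1}|a_k|$, and $|r|\le\widetilde R_3(f)=\max\{1,\frac{1}{|a_n|}(|a_{n-1}|+\dots+|a_0|)\}$; i.e. $\rho(f),\rho(f')<\widetilde R_1(f)$, $\rho(f),\rho(f')<\widetilde R_2(f)$, $\rho(f),\rho(f')\le\widetilde R_3(f)$.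
   Context: $\mathbb{O}=(-1,-1,-1)_{\mathbb{R}}$ is the real Cayley--Dickson algebra obtained from $\mathbb{R}$ by three doublings $B\{\gamma\}=B\times B$, $(a,b)(c,d)=(ac+\gamma\bar d b,\ da+b\bar c)$, $\overline{(a,b)}=(\bar a,-b)$, with $\gamma=-1$. Norm $\mathrm{n}(\lambda)=\bar\lambda\lambda$ and $|\lambda|=\sqrt{\mathrm{n}(\lambda)}$ (Euclidean norm). $\mathbb{O}[x]=\mathbb{O}\otimes_{\mathbb{R}}\mathbb{R}[x]$ with central $x$; substitution $f(r)=\sum_k a_k(r^k)$; formal derivative $f'(x)=\sum_k ka_kx^{k-1}$. The spectral radius of $g$ is $\rho(g)=\sup\{|\lambda|:\lambda\in\mathbb{O},\ g(\lambda)=0\}$. *)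

(* Defs.v *)
From HB Require Import structures.
From mathcomp Require Import all_boot all_order all_algebra.
From mathcomp Require Import reals.
Set Implicit Arguments. Unset Strict Implicit. Unset Printing Implicit Defensive.
Import Order.TTheory GRing.Theory Num.Theory.
Local Open Scope ring_scope.

Record alg_ops (B : Type) := AlgOps {
  a_zero : B; a_one : B; a_add : B -> B -> B; a_opp : B -> B;
  a_mul : B -> B -> B; a_conj : B -> B }.

(* One Cayley--Dickson doubling B{gamma} with gamma = -1:
   (a,b)(c,d) = (ac + gamma * conj(d) b, da + b conj(c)),  conj(a,b) = (conj a, -b). *)
Definition cd_double (B : Type) (o : alg_ops B) : alg_ops (B * B) :=
  AlgOps (a_zero o, a_zero o) (a_one o, a_zero o)
    (fun x y => (a_add o x.1 y.1, a_add o x.2 y.2))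
    (fun x => (a_opp o x.1, a_opp o x.2))
    (fun x y => (a_add o (a_mul o x.1 y.1) (a_opp o (a_mul o (a_conj o y.2) x.2)),
                 a_add o (a_mul o y.2 x.1) (a_mul o x.2 (a_conj o y.1))))
    (fun x => (a_conj o x.1, a_opp o x.2)).

Definition real_ops (R : realType) : alg_ops R :=
  AlgOps 0 1 +%R -%R *%R id.

(* The real octonions O = (-1,-1,-1)_R : three doublings of R. *)
Definition oct (R : realType) : Type := ((R * R) * (R * R)) * ((R * R) * (R * R)).
Definition oct_ops (R : realType) : alg_ops (oct R) :=
  cd_double (cd_double (cd_double (real_ops R))).

Section Oct.
Variable R : realType.
Definition ozero : oct R := a_zero (oct_ops R).
Definition oone : oct R := a_one (oct_ops R).
Definition oadd : oct R -> oct R -> oct R := a_add (oct_ops R).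
Definition omul : oct R -> oct R -> oct R := a_mul (oct_ops R).
Definition oconj : oct R -> oct R := a_conj (oct_ops R).

Definition ore (x : oct R) : R := x.1.1.1.
(* norm n(lambda) = conj(lambda) lambda (a real scalar), |lambda| = sqrt(n(lambda)) *)
Definition onormsq (x : oct R) : R := ore (omul (oconj x) x).
Definition oabs (x : oct R) : R := Num.sqrt (onormsq x).

(* r^k, with r^0 = 1 and r^(k+1) = r r^k (O is power-associative) *)
Fixpoint opow (r : oct R) (k : nat) : oct R :=
  match k with O => oone | S k' => omul r (opow r k') end.

Definition omuln (a : oct R) (k : nat) : oct R := iter k (oadd a) ozero.

Definition opeval (n : nat) (a : nat -> oct R) (r : oct R) : oct R :=
  foldr oadd ozero [seq omul (a k) (opow r k) | k <- iota 0 n.+1].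

(* coefficients of the formal derivative: f'(x) = sum_{k=0}^{n-1} (k+1) a_{k+1} x^k *)
Definition oderiv_coef (a : nat -> oct R) : nat -> oct R :=
  fun k => omuln (a k.+1) k.+1.
End Oct.

(* Main.v *)
Require Import Defs.
From HB Require Import structures.
From mathcomp Require Import all_boot all_order all_algebra.
From mathcomp Require Import reals ring lra.
Import Order.TTheory GRing.Theory Num.Theory.
Local Open Scope ring_scope.
Section S.
Variable R : realType.
Implicit Types x y z : oct R.

Ltac octcase x := case: x => [[[? ?] [? ?]] [[? ?] [? ?]]].

Lemma onormsqE x : onormsq x = x.1.1.1^+2 + x.1.1.2^+2 + x.1.2.1^+2 + x.1.2.2^+2 + x.2.1.1^+2 + x.2.1.2^+2 + x.2.2.1^+2 + x.2.2.2^+2.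
Proof. octcase x; rewrite /onormsq /omul /oconj /ore /=; ring. Qed.

Lemma onormsq_ge0 x : 0 <= onormsq x.
Proof. rewrite onormsqE; octcase x => /=. repeat apply: addr_ge0; exact: sqr_ge0. Qed.

Lemma oabs_ge0 x : 0 <= oabs x.
Proof. exact: sqrtr_ge0. Qed.

Lemma sq0 (a : R) : a ^+ 2 = 0 -> a = 0.
Proof. by move/eqP; rewrite sqrf_eq0 => /eqP. Qed.

Lemma oabs_eq0 x : oabs x = 0 -> x = ozero R.
Proof.
rewrite /oabs => /eqP; rewrite sqrtr_eq0 => h.
have h0 := onormsq_ge0 x.
have {h h0} : onormsq x = 0 by apply/eqP; rewrite eq_le; apply/andP; split.
rewrite onormsqE; case: x => [[[x1 x2] [x3 x4]] [[x5 x6] [x7 x8]]] /= E.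
have s1 := sqr_ge0 x1; have s2 := sqr_ge0 x2; have s3 := sqr_ge0 x3; have s4 := sqr_ge0 x4;
have s5 := sqr_ge0 x5; have s6 := sqr_ge0 x6; have s7 := sqr_ge0 x7; have s8 := sqr_ge0 x8.
have e1 : x1 = 0 by apply: sq0; lra. have e2 : x2 = 0 by apply: sq0; lra.
have e3 : x3 = 0 by apply: sq0; lra. have e4 : x4 = 0 by apply: sq0; lra.
have e5 : x5 = 0 by apply: sq0; lra. have e6 : x6 = 0 by apply: sq0; lra.
have e7 : x7 = 0 by apply: sq0; lra. have e8 : x8 = 0 by apply: sq0; lra.
by rewrite e1 e2 e3 e4 e5 e6 e7 e8.
Qed.

Definition odot x y := x.1.1.1*y.1.1.1 + x.1.1.2*y.1.1.2 + x.1.2.1*y.1.2.1 + x.1.2.2*y.1.2.2 + x.2.1.1*y.2.1.1 + x.2.1.2*y.2.1.2 + x.2.2.1*y.2.2.1 + x.2.2.2*y.2.2.2.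

Lemma onormsq_add x y : onormsq (oadd x y) = onormsq x + onormsq y + 2 * odot x y.
Proof. rewrite !onormsqE /odot; octcase x; octcase y; rewrite /=; ring. Qed.

Lemma odot_CS x y : odot x y ^+ 2 <= onormsq x * onormsq y.
Proof.
rewrite !onormsqE /odot.
case: x => [[[x1 x2] [x3 x4]] [[x5 x6] [x7 x8]]]; case: y => [[[y1 y2] [y3 y4]] [[y5 y6] [y7 y8]]] /=.
rewrite -subr_ge0.
set L := (_ - _).
have -> : L = (x1*y2 - x2*y1)^+2 + (x1*y3 - x3*y1)^+2 + (x1*y4 - x4*y1)^+2 + (x1*y5 - x5*y1)^+2 + (x1*y6 - x6*y1)^+2 + (x1*y7 - x7*y1)^+2 + (x1*y8 - x8*y1)^+2 + (x2*y3 - x3*y2)^+2 + (x2*y4 - x4*y2)^+2 + (x2*y5 - x5*y2)^+2 + (x2*y6 - x6*y2)^+2 + (x2*y7 - x7*y2)^+2 + (x2*y8 - x8*y2)^+2 + (x3*y4 - x4*y3)^+2 + (x3*y5 - x5*y3)^+2 + (x3*y6 - x6*y3)^+2 + (x3*y7 - x7*y3)^+2 + (x3*y8 - x8*y3)^+2 + (x4*y5 - x5*y4)^+2 + (x4*y6 - x6*y4)^+2 + (x4*y7 - x7*y4)^+2 + (x4*y8 - x8*y4)^+2 + (x5*y6 - x6*y5)^+2 + (x5*y7 - x7*y5)^+2 + (x5*y8 - x8*y5)^+2 + (x6*y7 - x7*y6)^+2 + (x6*y8 - x8*y6)^+2 + (x7*y8 - x8*y7)^+2.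
  rewrite /L; ring.
repeat apply: addr_ge0; exact: sqr_ge0.
Qed.

Lemma sq_le (a b : R) : 0 <= b -> a^+2 <= b^+2 -> a <= b.
Proof. move=> hb h; rewrite leNgt; apply/negP => H. nra. Qed.
Lemma sq_lt (a b : R) : 0 <= b -> a^+2 < b^+2 -> a < b.
Proof. move=> hb h; rewrite ltNge; apply/negP => H. nra. Qed.
Lemma tri (u v w d : R) : 0 <= u -> 0 <= v -> 0 <= w -> d^+2 <= (u*v)^+2 ->
  w^+2 = u^+2 + v^+2 + 2 * d -> w <= u + v.
Proof.
move=> hu hv hw h E.
have hd : d <= u * v by apply: sq_le => //; exact: mulr_ge0.
apply: sq_le; first lra.
rewrite E; nra.
Qed.
Lemma oabs_add x y : oabs (oadd x y) <= oabs x + oabs y.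
Proof.
rewrite /oabs.
have CS := odot_CS x y; have E := onormsq_add x y.
have hx := onormsq_ge0 x; have hy := onormsq_ge0 y; have hxy := onormsq_ge0 (oadd x y).
have ux := sqr_sqrtr hx; have uy := sqr_sqrtr hy; have uxy := sqr_sqrtr hxy.
apply: (@tri _ _ _ (odot x y)); rewrite ?sqrtr_ge0 //.
  by rewrite exprMn ux uy.
by rewrite uxy ux uy.
Qed.

Lemma oabs_mul x y : oabs (omul x y) = oabs x * oabs y.
Proof.
rewrite /oabs -sqrtrM ?onormsq_ge0 //; congr Num.sqrt.
case: x => [[[x1 x2] [x3 x4]] [[x5 x6] [x7 x8]]]; case: y => [[[y1 y2] [y3 y4]] [[y5 y6] [y7 y8]]].
rewrite /onormsq /omul /oconj /ore /=; ring.
Qed.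

Lemma oabs0 : oabs (ozero R) = 0.
Proof. by rewrite /oabs onormsqE /= expr0n /= !addr0 sqrtr0. Qed.

Definition oneg x : oct R := a_opp (oct_ops R) x.

Ltac octeq := congr (((_,_),(_,_)),((_,_),(_,_))); ring.

Lemma oabs_neg x : oabs (oneg x) = oabs x.
Proof. rewrite /oabs !onormsqE; octcase x; rewrite /=; congr Num.sqrt; ring. Qed.

Lemma oadd_negK x y : oadd (oadd x y) (oneg x) = y.
Proof. octcase x; octcase y; rewrite /oadd /oneg /=; octeq. Qed.

Lemma oaddx0 x : oadd x (ozero R) = x.
Proof. octcase x; rewrite /oadd /ozero /=; octeq. Qed.

Lemma oabs_sub x y : oabs y <= oabs (oadd x y) + oabs x.
Proof. by rewrite -{1}(oadd_negK x y) -(oabs_neg x) oabs_add. Qed.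

Lemma foldr_bound (g : nat -> oct R) (z : oct R) (s : seq nat) :
  oabs z <= oabs (foldr (@oadd R) z (map g s)) + \sum_(k <- s) oabs (g k).
Proof.
elim: s => [|x s IH] /=; first by rewrite big_nil addr0.
rewrite big_cons.
have := oabs_sub (g x) (foldr (@oadd R) z [seq g i | i <- s]). lra.
Qed.

Lemma oabs_opow (r : oct R) (k : nat) : oabs (opow r k) = oabs r ^+ k.
Proof.
elim: k => [|k IH] /=; last by rewrite oabs_mul IH exprS.
by rewrite /oabs onormsqE /= expr0n /= expr1n !addr0 sqrtr1.
Qed.

Lemma opeval_bound n (a : nat -> oct R) (r : oct R) : opeval n a r = ozero R ->
  oabs (a n) * oabs r ^+ n <= \sum_(k < n) oabs (a k) * oabs r ^+ k.
Proof.
rewrite /opeval -addn1 iotaD map_cat foldr_cat /= add0n oaddx0 => E.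
have := foldr_bound (fun k => omul (a k) (opow r k)) (omul (a n) (opow r n)) (iota 0 n).
rewrite /= E oabs0 add0r oabs_mul oabs_opow.
rewrite -(big_mkord xpredT (fun k => oabs (a k) * oabs r ^+ k)) /index_iota subn0.
by under eq_bigr do rewrite oabs_mul oabs_opow.
Qed.



Lemma oabs_omuln (a : oct R) (k : nat) : oabs (omuln a k) = k%:R * oabs a.
Proof.
case: a => [[[a1 a2] [a3 a4]] [[a5 a6] [a7 a8]]].
set a := (_, _).
have E : omuln a k = ((k%:R * a1, k%:R * a2), (k%:R * a3, k%:R * a4),
   ((k%:R * a5, k%:R * a6), (k%:R * a7, k%:R * a8))).
  elim: k => [|k IH]; first by rewrite /omuln /= !mul0r.
  rewrite /omuln iterS -/(omuln a k) IH /oadd /= -addn1 natrD; octeq.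
rewrite E /oabs !onormsqE /=.
rewrite [X in Num.sqrt X = _](_ : _ = k%:R^+2 * (a1^+2 + a2^+2 + a3^+2 + a4^+2 + a5^+2 + a6^+2 + a7^+2 + a8^+2)); last by ring.
rewrite sqrtrM ?sqr_ge0 // sqrtr_sqr ger0_norm ?ler0n //.
Qed.

Lemma CS_step (D P Q x y : R) : 0 <= P -> 0 <= Q -> D^+2 <= P * Q ->
  (D + x * y)^+2 <= (P + x^+2) * (Q + y^+2).
Proof.
move=> hP hQ h.
have h1 : (2 * D * x * y)^+2 <= (P * y^+2 + Q * x^+2)^+2.
  have -> : (P * y^+2 + Q * x^+2)^+2 = (P * y^+2 - Q * x^+2)^+2 + 4 * (P * Q) * (x^+2 * y^+2) by ring.
  have -> : (2 * D * x * y)^+2 = 4 * D^+2 * (x^+2 * y^+2) by ring.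
  have := sqr_ge0 (P * y^+2 - Q * x^+2). have := sqr_ge0 x; have := sqr_ge0 y.
  have hxy : 0 <= x^+2 * y^+2 by rewrite mulr_ge0 ?sqr_ge0.
  nra.
have h2 : 2 * D * x * y <= P * y^+2 + Q * x^+2.
  apply: sq_le => //. rewrite addr_ge0 // mulr_ge0 // sqr_ge0 //.
nra.
Qed.

Lemma CS (m : nat) (F G : nat -> R) :
  (\sum_(k < m) F k * G k)^+2 <= (\sum_(k < m) F k ^+ 2) * (\sum_(k < m) G k ^+ 2).
Proof.
elim: m => [|m IH]; first by rewrite !big_ord0 expr0n /= mul0r.
rewrite !big_ord_recr /=.
apply: CS_step => //; apply: sumr_ge0 => i _; exact: sqr_ge0.
Qed.

Lemma bigmax_ub (n : nat) : forall (c : nat -> R) (k : nat), (k < n)%N -> c k <= \big[Num.max/0]_(i < n) c i.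
Proof.
elim: n => [|n IH] // c k hk.
rewrite big_ord_recl /= le_max.
case: k hk => [|k] hk; first by rewrite lexx.
by rewrite (IH (fun i => c i.+1) k hk) orbT.
Qed.

Lemma bigmax_ge0 (n : nat) : forall (c : nat -> R), 0 <= \big[Num.max/0]_(i < n) c i.
Proof.
elim: n => [|n IH] c; first by rewrite big_ord0.
by rewrite big_ord_recl /= le_max (IH (fun i => c i.+1)) orbT.
Qed.

Lemma real_bounds (n : nat) (c : nat -> R) (A t : R) :
  (1 <= n)%N -> 0 < A -> (forall k, 0 <= c k) -> 0 <= t ->
  A * t ^+ n <= \sum_(k < n) c k * t ^+ k ->
  [/\ t < Num.sqrt (\sum_(k < n) c k ^+ 2 + A ^+ 2) / A,
      t < 1 + (\big[Num.max/0]_(k < n) c k) / A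
    & t <= Num.max 1 ((\sum_(k < n) c k) / A)].
Proof.
move=> hn hA hc ht H.
case: n hn H => // m _ H.
set C2 := \sum_(k < m.+1) c k ^+ 2; set M := \big[Num.max/0]_(k < m.+1) c k.
set C := \sum_(k < m.+1) c k.
have hC2 : 0 <= C2 by apply: sumr_ge0 => i _; exact: sqr_ge0.
have hM : 0 <= M by exact: bigmax_ge0.
have hC : 0 <= C by apply: sumr_ge0 => i _.
have hS : 0 < C2 + A^+2 by have := sqr_ge0 A; nra.
have hsq := sqr_sqrtr (ltW hS).
have hs0 := sqrtr_ge0 (C2 + A^+2).
have [t0|tpos] := eqVneq t 0.
  rewrite t0; split.
  - by rewrite divr_gt0 // sqrtr_gt0.
  - by have := divr_ge0 hM (ltW hA); lra.
  - by rewrite le_max ler01.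
have {tpos} tpos : 0 < t by rewrite lt_def tpos ht.
set T := t ^+ m.+1 in H *.
have hT : 0 < T by rewrite exprn_gt0.
have hAT : 0 < A * T by rewrite mulr_gt0.
set SS := \sum_(k < m.+1) c k * t ^+ k in H *.
split.
-
  rewrite ltr_pdivlMr //.
  apply: sq_lt => //; rewrite hsq.
  have hcs := CS m.+1 c (fun k => t ^+ k).
  rewrite -/SS -/C2 in hcs.
  set G2 := \sum_(k < m.+1) (t ^+ k) ^+ 2 in hcs.
  have hG2 : 0 <= G2 by apply: sumr_ge0 => i _; exact: sqr_ge0.
  have hC2p : 0 < C2.
    rewrite lt_def hC2 andbT; apply/negP => /eqP E; rewrite E mul0r in hcs.
    have : SS ^+ 2 = 0 by apply/eqP; rewrite eq_le hcs sqr_ge0.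
    move/eqP; rewrite sqrf_eq0 => /eqP E2. lra.
  have [t1|t1] := lerP t 1.
    have : (t * A)^+2 <= A^+2.
      rewrite exprMn; have := sqr_ge0 A; have : t^+2 <= 1 by rewrite expr_le1 //. nra.
    lra.
  have eG : (t^+2 - 1) * G2 = T^+2 - 1.
    rewrite /T -exprM mulnC exprM [X in _ = X]subrX1 /G2; congr (_ * _); apply: eq_bigr => i _; by rewrite -!exprM mulnC.
  have h1 : (A * T)^+2 <= SS^+2 by nra.
  have ht2 : 0 < t^+2 - 1 by nra.
  have h2 : (A * T)^+2 * (t^+2 - 1) <= C2 * (T^+2 - 1).
    rewrite -eG. nra.
  have h3 : (A^+2 * (t^+2 - 1)) * T^+2 < C2 * T^+2.
    have := sqr_ge0 T. rewrite exprMn in h2. nra.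
  rewrite ltr_pM2r ?exprn_gt0 // in h3.
  rewrite exprMn. lra.
-
  have hSM : SS <= M * \sum_(k < m.+1) t ^+ k.
    rewrite mulr_sumr; apply: ler_sum => i _; apply: ler_wpM2r; first exact: exprn_ge0.
    exact: bigmax_ub.
  set G := \sum_(k < m.+1) t ^+ k in hSM.
  have hG : 0 <= G by apply: sumr_ge0 => i _; exact: exprn_ge0.
  have hMp : 0 < M.
    rewrite lt_def hM andbT; apply/negP => /eqP E; rewrite E mul0r in hSM. lra.
  have hMA : 0 < M / A by rewrite divr_gt0.
  have [t1|t1] := lerP t 1; first lra.
  have eG : (t - 1) * G = T - 1 by rewrite subrX1.
  have h2 : (A * T) * (t - 1) <= M * (T - 1).
    rewrite -eG. nra.
  have h3 : (A * (t - 1)) * T < M * T by nra.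
  rewrite ltr_pM2r // in h3.
  rewrite -ltrBlDl ltr_pdivlMr //. lra.
-
  have [t1|t1] := lerP t 1; first by rewrite le_max t1.
  have hSC : SS <= C * t ^+ m.
    rewrite /SS /C mulr_suml; apply: ler_sum => i _; apply: ler_wpM2l => //.
    apply: ler_weXn2l; [lra | by rewrite -ltnS].
  have htm : 0 < t ^+ m by rewrite exprn_gt0.
  have : (A * t) * t ^+ m <= C * t ^+ m by rewrite -mulrA -exprS -/T; lra.
  rewrite ler_pM2r // => h.
  by rewrite le_max ler_pdivlMr // mulrC h orbT.
Qed.

Lemma deriv_bound (m : nat) (a : nat -> oct R) (r : oct R) :
  opeval m (oderiv_coef a) r = ozero R ->
  oabs (a m.+1) * oabs r ^+ m.+1 <= \sum_(k < m.+1) oabs (a k) * oabs r ^+ k.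
Proof.
move=> E; have h := @opeval_bound _ _ _ E.
rewrite /oderiv_coef oabs_omuln in h.
set t := oabs r in h *.
have ht : 0 <= t by exact: oabs_ge0.
have h2 : \sum_(k < m) oabs (omuln (a k.+1) k.+1) * t ^+ k <= m.+1%:R * \sum_(k < m) oabs (a k.+1) * t ^+ k.
  rewrite mulr_sumr; apply: ler_sum => i _; rewrite oabs_omuln mulrA.
  apply: ler_wpM2r; first exact: exprn_ge0.
  apply: ler_wpM2r; first exact: oabs_ge0.
  by rewrite ler_nat ltnS ltnW.
have h3 : oabs (a m.+1) * t ^+ m <= \sum_(k < m) oabs (a k.+1) * t ^+ k.
  have hm : 0 < m.+1%:R :> R by rewrite ltr0n.
  rewrite -(ler_pM2l hm) mulrA. lra.
rewrite big_ord_recl /= expr0 mulr1.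
have h4 : oabs (a m.+1) * t ^+ m.+1 <= (\sum_(k < m) oabs (a k.+1) * t ^+ k) * t.
  by rewrite exprSr mulrA; apply: ler_wpM2r.
rewrite mulr_suml in h4.
have h5 : \sum_(i < m) oabs (a i.+1) * t ^+ i * t = \sum_(i < m) oabs (a (lift ord0 i)) * t ^+ (lift ord0 i).
  by apply: eq_bigr => i _; rewrite /= exprSr mulrA.
have := oabs_ge0 (a 0). lra.
Qed.
End S.

Theorem corollary4p15 (R : realType) (n : nat) (a : nat -> oct R)
  (hn : (1 <= n)%N) (han : a n <> ozero R) (r : oct R) :
  (opeval n a r = ozero R \/ opeval n.-1 (oderiv_coef a) r = ozero R) ->
  [/\ oabs r < Num.sqrt (\sum_(k < n.+1) oabs (a k) ^+ 2) / oabs (a n),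
      oabs r < 1 + (\big[Num.max/0]_(k < n) oabs (a k)) / oabs (a n)
    & oabs r <= Num.max 1 ((\sum_(k < n) oabs (a k)) / oabs (a n))].
Proof.
move=> hroot.
have hA : 0 < oabs (a n).
  rewrite lt_def oabs_ge0 andbT; apply/negP => /eqP E. apply: han. by apply: oabs_eq0.
have key : oabs (a n) * oabs r ^+ n <= \sum_(k < n) oabs (a k) * oabs r ^+ k.
  case: hroot => E; first exact: opeval_bound.
  case: n hn han hA E => // m _ _ hA E.
  exact: deriv_bound.
rewrite big_ord_recr /=.
have := (@real_bounds R n (fun k => oabs (a k)) (oabs (a n)) (oabs r) hn hA (fun k => oabs_ge0 _ _) (oabs_ge0 _ _) key)
; exact.
Qed.
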